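(* Let $\pi$ be a projective plane of order $q$ and let $a,b$ be positive integers. The complete bipartite graph $K_{a,b}$ embeds in $\pi$ if and only if either $a,b\le q$, or $\{a,b\}=\{1,q+1\}$ (i.e. the graph is $K_{1,q+1}$).
   Context: $K_{a,b}$ is the complete bipartite graph with classes of sizes $a$ and $b$ (so $K_{a,b}\cong K_{b,a}$). A finite projective plane of order $q$ has $q^2+q+1$ points and lines, $q+1$ points on each line and $q+1$ lines through each point; any two distinct points lie on a unique line and any two lines meet in a unique point. An embedding of a simple graph $G=(V,E)$ into a projective plane is an injective map $\phi$ from $V$ to the points such that the induced map sending an edge $ab$ to the line through $\phi(a),\phi(b)$ is injective on $E$. *)

(* Defs.v *)
From mathcomp Require Import all_boot.
Set Implicit Arguments. Unset Strict Implicit. Unset Printing Implicit Defensive.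

Definition proj_plane_order (P L : finType) (inc : P -> L -> bool) (q : nat) : Prop :=
  [/\ #|P| = q ^ 2 + q + 1 /\ #|L| = q ^ 2 + q + 1,
      forall l : L, #|[set p | inc p l]| = q.+1,
      forall p : P, #|[set l | inc p l]| = q.+1,
      forall p1 p2 : P, p1 != p2 -> (exists! l : L, inc p1 l && inc p2 l)
    & forall l1 l2 : L, l1 != l2 -> (exists! p : P, inc p l1 && inc p l2)].

Definition Kab (a b : nat) : rel ('I_a + 'I_b)%type :=
  fun x y => match x, y with
             | inl _, inr _ => true
             | inr _, inl _ => true
             | _, _ => false
             end.

(* Embedding of a simple graph (V, E) (E symmetric irreflexive) into the plane:
   an injective vertex map phi such that the map sending an edge uv to the
   (unique) line through phi u and phi v is injective on edges, i.e. two edges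
   whose endpoints all lie on a common line are the same edge. *)
Definition embeds (V : finType) (E : rel V) (P L : finType) (inc : P -> L -> bool)
  : Prop :=
  exists phi : V -> P, injective phi /\
    forall (u v u' v' : V) (l : L), E u v -> E u' v' ->
      inc (phi u) l -> inc (phi v) l -> inc (phi u') l -> inc (phi v') l ->
      [set u; v] = [set u'; v'].
Arguments Kab : clear implicits.

(* Main.v *)
Require Import Defs.
From mathcomp Require Import all_boot.
From mathcomp Require Import zify.
Set Implicit Arguments. Unset Strict Implicit. Unset Printing Implicit Defensive.

Definition side a b (x : 'I_a + 'I_b) : bool := if x is inl _ then true else false.

Lemma Kab_side a b (u v : 'I_a + 'I_b) : Kab a b u v = (side u != side v).
Proof. by case: u; case: v. Qed.

Lemma set2_mem (T : finType) (x y x' y' : T) :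
  [set x; y] = [set x'; y'] -> (x == x') || (x == y').
Proof. by move=> H; have := set21 x y; rewrite H in_set2. Qed.

Lemma embed_sep a b (P L : finType) (inc : P -> L -> bool) (phi : 'I_a + 'I_b -> P) :
  injective phi ->
  (forall x y z l, side x = side y -> side z != side x ->
     inc (phi x) l -> inc (phi y) l -> inc (phi z) l -> x = y) ->
  embeds (Kab a b) inc.
Proof.
move=> Hinj Hsep; exists phi; split=> // u v u' v' l.
rewrite !Kab_side => Huv Huv' hu hv hu' hv'.
case: (boolP (side u' == side u)) => Hs.
- have Hs2 : side v' = side v.
    by move: Huv Huv' Hs; case: (side v'); case: (side u'); case: (side v); case: (side u).
  have -> : u' = u.
    by apply: (Hsep u' u v l) => //; [ rewrite (eqP Hs) | rewrite (eqP Hs) eq_sym].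
  have -> : v' = v by apply: (Hsep v' v u l) => //; rewrite Hs2.
  done.
- have Hs1 : side u' = side v.
    by move: Huv Huv' Hs; case: (side v'); case: (side u'); case: (side v); case: (side u).
  have Hs2 : side v' = side u.
    by move: Huv Huv' Hs; case: (side v'); case: (side u'); case: (side v); case: (side u).
  have -> : u' = v by apply: (Hsep u' v u l) => //; rewrite Hs1 // eq_sym.
  have -> : v' = u by apply: (Hsep v' u v l) => //; rewrite Hs2 // eq_sym.
  by rewrite setUC.
Qed.

Lemma line_uniq (P L : finType) (inc : P -> L -> bool) q (HP : proj_plane_order inc q)
  (p1 p2 : P) (l l' : L) :
  p1 != p2 -> inc p1 l -> inc p2 l -> inc p1 l' -> inc p2 l' -> l = l'.
Proof.
case: HP => _ _ _ H _ hne h1 h2 h1' h2'.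
case: (H p1 p2 hne) => l0 [_ Hu].
have -> : l = l0 by symmetry; apply: Hu; rewrite h1 h2.
have -> : l' = l0 by symmetry; apply: Hu; rewrite h1' h2'.
done.
Qed.

Lemma line_ex (P L : finType) (inc : P -> L -> bool) q (HP : proj_plane_order inc q)
  (p1 p2 : P) : p1 != p2 -> exists l, inc p1 l && inc p2 l.
Proof. by case: HP => _ _ _ H _ hne; case: (H p1 p2 hne) => l [hl _]; exists l. Qed.

Definition sw a b (x : 'I_a + 'I_b) : 'I_b + 'I_a :=
  match x with inl i => inr i | inr j => inl j end.

Lemma swK a b (x : 'I_a + 'I_b) : sw (sw x) = x.
Proof. by case: x. Qed.

Lemma embeds_swap a b (P L : finType) (inc : P -> L -> bool) :
  embeds (Kab a b) inc -> embeds (Kab b a) inc.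
Proof.
case=> phi [Hinj H]; exists (fun x => phi (sw x)); split.
- move=> x y /Hinj; case: x; case: y => i j //= [->] //.
- move=> u v u' v' l Huv Huv' h1 h2 h3 h4.
  have Kab_sw x y : Kab b a x y -> Kab a b (sw x) (sw y) by case: x; case: y.
  have E : [set sw u; sw v] = [set sw u'; sw v'].
    by apply: (H _ _ _ _ l) => //; apply: Kab_sw.
  have := congr1 (fun S : {set 'I_a + 'I_b} => [set sw x | x in S]) E.
  by rewrite /= !imsetU1 !imset_set1 !swK.
Qed.
Lemma fwd (P L : finType) (inc : P -> L -> bool) q a b (HP : proj_plane_order inc q) :
  embeds (Kab a b) inc -> 0 < b -> q < a -> a = q.+1 /\ b = 1.
Proof.
move=> [phi [Hinj H]] hb hqa.
have HP' := HP; case: HP' => _ _ HLp _ _.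
pose y : 'I_a + 'I_b := inr (Ordinal hb).
pose py := phi y.
have /card_gt0P [l0 _] : 0 < #|[set l | inc py l]| by rewrite HLp.
pose ln p := odflt l0 [pick l | inc p l && inc py l].
have lnP p : p != py -> inc p (ln p) && inc py (ln p).
  move=> hp; rewrite /ln; case: pickP => [l hl //|hn].
  by case: (line_ex HP hp) => l hl; rewrite hn in hl.
pose g (i : 'I_a) := ln (phi (inl i)).
have hne i : phi (inl i) != py by apply/eqP => /Hinj.
have gP i : inc (phi (inl i)) (g i) && inc py (g i) by apply: lnP.
have ginj : injective g.
  move=> i i' e.
  have /andP [h1 h2] := gP i.
  have h1' : inc (phi (inl i')) (g i) by rewrite e; case/andP: (gP i').
  have E := H (inl i) y (inl i') y (g i) erefl erefl h1 h2 h1' h2.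
  by case/orP: (set2_mem E) => /eqP // [].
have Hsub : g @: [set: 'I_a] \subset [set l | inc py l].
  by apply/subsetP => _ /imsetP [i _ ->]; rewrite inE; case/andP: (gP i).
have Hcard : #|g @: [set: 'I_a]| = a by rewrite card_imset // cardsT card_ord.
have ha : a = q.+1 by have := subset_leq_card Hsub; rewrite Hcard HLp; lia.
split=> //.
apply/eqP; rewrite eqn_leq hb andbT leqNgt; apply/negP => hb1.
pose y' : 'I_a + 'I_b := inr (Ordinal hb1).
have hy' : phi y' != py by apply/eqP => /Hinj.
have Heq : g @: setT = [set l | inc py l].
  by apply/eqP; rewrite eqEcard Hsub Hcard HLp ha leqnn.
have /andP [m1 m2] := lnP _ hy'.
have : ln (phi y') \in [set l | inc py l] by rewrite inE.
rewrite -Heq => /imsetP [i _ hi].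
have /andP [h1 h2] := gP i.
rewrite -hi in h1.
have E := H (inl i) y (inl i) y' _ erefl erefl h1 m2 h1 m1.
have := set22 (inl i) y; rewrite E in_set2 => /orP [] //.
Qed.
Lemma constr1 (P L : finType) (inc : P -> L -> bool) q a b (HP : proj_plane_order inc q) :
  0 < a -> a <= q -> b <= q -> embeds (Kab a b) inc.
Proof.
move=> ha0 ha hb; have HP' := HP; case: HP' => [[_ HLc] Hl _ _ Hll].
have : 1 < #|L| by rewrite HLc addn1 ltnS addn_gt0 (leq_trans ha0 ha) orbT.
case/card_gt1P => l1 [l2 [_ _ hl12]].
case: (Hll l1 l2 hl12) => o [/andP [ho1 ho2] Hou].
have disj x : inc x l1 -> inc x l2 -> x = o.
  by move=> h1 h2; symmetry; apply: Hou; rewrite h1 h2.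
pose S1 := [set x | inc x l1] :\ o.
pose S2 := [set x | inc x l2] :\ o.
have cS1 : size (enum S1) = q.
  have := cardsD1 o [set x | inc x l1]; rewrite Hl in_set ho1 add1n cardE; by case.
have cS2 : size (enum S2) = q.
  have := cardsD1 o [set x | inc x l2]; rewrite Hl in_set ho2 add1n cardE; by case.
pose phi (x : 'I_a + 'I_b) := match x with inl i => nth o (enum S1) i | inr j => nth o (enum S2) j end.
have lt1 (i : 'I_a) : i < size (enum S1) by rewrite cS1 (leq_trans (ltn_ord i) ha).
have lt2 (i : 'I_b) : i < size (enum S2) by rewrite cS2 (leq_trans (ltn_ord i) hb).
have mS1 (i : 'I_a) : inc (phi (inl i)) l1 && (phi (inl i) != o).
  have : phi (inl i) \in S1 by rewrite -mem_enum mem_nth.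
  by rewrite !inE andbC.
have mS2 (i : 'I_b) : inc (phi (inr i)) l2 && (phi (inr i) != o).
  have : phi (inr i) \in S2 by rewrite -mem_enum mem_nth.
  by rewrite !inE andbC.
have Hinj : injective phi.
  case=> [i|j] [i'|j'] e.
  - congr inl; apply/val_inj/eqP.
    by rewrite -(nth_uniq o (lt1 i) (lt1 i') (enum_uniq S1)); apply/eqP.
  - have /andP [a1 b1] := mS1 i; have /andP [a2 b2] := mS2 j'.
    rewrite e in a1 b1.
    by rewrite (disj _ a1 a2) eqxx in b1.
  - have /andP [a1 b1] := mS1 i'; have /andP [a2 b2] := mS2 j.
    rewrite -e in a1 b1.
    by rewrite (disj _ a1 a2) eqxx in b1.
  - congr inr; apply/val_inj/eqP.
    by rewrite -(nth_uniq o (lt2 j) (lt2 j') (enum_uniq S2)); apply/eqP.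
apply: (embed_sep Hinj).
move=> [i|j] [i'|j'] [k|k'] l // _ _ h1 h2 h3.
- case: (eqVneq i i') => [->//|hne]; exfalso.
  have hp : phi (inl i) != phi (inl i') by apply: contra hne => /eqP /Hinj [->].
  have /andP [a1 _] := mS1 i; have /andP [a2 _] := mS1 i'.
  have el := line_uniq HP hp h1 h2 a1 a2.
  have /andP [a3 b3] := mS2 k'.
  rewrite el in h3.
  by rewrite (disj _ h3 a3) eqxx in b3.
- case: (eqVneq j j') => [->//|hne]; exfalso.
  have hp : phi (inr j) != phi (inr j') by apply: contra hne => /eqP /Hinj [->].
  have /andP [a1 _] := mS2 j; have /andP [a2 _] := mS2 j'.
  have el := line_uniq HP hp h1 h2 a1 a2.
  have /andP [a3 b3] := mS1 k.
  rewrite el in h3.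
  by rewrite (disj _ a3 h3) eqxx in b3.
Qed.

Lemma constr2 (P L : finType) (inc : P -> L -> bool) q (HP : proj_plane_order inc q) :
  0 < q -> embeds (Kab 1 q.+1) inc.
Proof.
move=> hq; have HP' := HP; case: HP' => [[HPc _] Hl Hp _ _].
have /card_gt0P [p _] : 0 < #|P| by rewrite HPc addn1.
pose Lp := [set l | inc p l].
have cLp : size (enum Lp) = q.+1 by rewrite -cardE Hp.
have /card_gt0P [l0 _] : 0 < #|Lp| by rewrite Hp.
pose f m := odflt p [pick x | inc x m && (x != p)].
have fP m : inc (f m) m && (f m != p).
  rewrite /f; case: pickP => [x hx //|hn].
  have : 1 < #|[set x | inc x m]| by rewrite Hl.
  case/card_gt1P => x [y [hx hy hxy]].
  rewrite !inE in hx hy.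
  case: (eqVneq x p) => [ep|hxp].
  - by have := hn y; rewrite hy /= -ep eq_sym (negbTE hxy).
  - by have := hn x; rewrite hx hxp.
pose mj (j : 'I_q.+1) := nth l0 (enum Lp) j.
have mjP j : inc p (mj j).
  have : mj j \in Lp by rewrite -mem_enum mem_nth // cLp.
  by rewrite inE.
have mj_inj : injective mj.
  move=> j j' e; apply/val_inj/eqP.
  rewrite -(nth_uniq l0 _ _ (enum_uniq Lp)); [exact/eqP | by rewrite cLp ltn_ord | by rewrite cLp ltn_ord].
pose phi (x : 'I_1 + 'I_q.+1) := match x with inl _ => p | inr j => f (mj j) end.
have Hinj : injective phi.
  case=> [i|j] [i'|j'] /= e.
  - by rewrite (ord1 i) (ord1 i').
  - by have /andP [_] := fP (mj j'); rewrite -e eqxx.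
  - by have /andP [_] := fP (mj j); rewrite e eqxx.
  - congr inr; apply: mj_inj.
    have /andP [a1 b1] := fP (mj j); have /andP [a2 b2] := fP (mj j').
    rewrite -e in a2.
    by apply: (line_uniq HP b1 a1 (mjP j) a2 (mjP j')).
apply: (embed_sep Hinj).
move=> [i|j] [i'|j'] [k|k'] l // _ _ h1 h2 h3.
- by rewrite (ord1 i) (ord1 i').
- congr inr; apply: mj_inj.
  have /andP [a1 b1] := fP (mj j); have /andP [a2 b2] := fP (mj j').
  have e1 := line_uniq HP b1 h1 h3 a1 (mjP j).
  have e2 := line_uniq HP b2 h2 h3 a2 (mjP j').
  by rewrite -e1 -e2.
Qed.

Theorem theorem3p2 (P L : finType) (inc : P -> L -> bool) (q a b : nat) :
  2 <= q -> proj_plane_order inc q -> 0 < a -> 0 < b ->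
  (embeds (Kab a b) inc <->
   ((a <= q) && (b <= q)) \/ ((a, b) = (1, q.+1) \/ (a, b) = (q.+1, 1))).
Proof.
move=> hq HP ha hb; split.
- move=> He.
  case: (boolP ((a <= q) && (b <= q))) => [hab|]; first by left.
  rewrite negb_and -!ltnNge => /orP [hqa|hqb]; right.
  + by have [-> ->] := fwd HP He hb hqa; right.
  + by have [-> ->] := fwd HP (embeds_swap He) ha hqb; left.
- case=> [/andP [h1 h2]| [[-> ->]|[-> ->]]].
  + exact: constr1 HP ha h1 h2.
  + by apply: constr2 HP _; lia.
  + by apply: embeds_swap; apply: constr2 HP _; lia.
Qed.
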